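(* Let $\mathfrak{M}$ be a structure of vocabulary $\{+,\cdot,+',\cdot'\}$ (all four symbols binary function symbols) which is a model of $P(+,\cdot,\{+',\cdot'\})\cup P(+',\cdot',\{+,\cdot\})$. Then there is an isomorphism $\pi:\mathfrak{M}\restriction\{+,\cdot\}\cong\mathfrak{M}\restriction\{+',\cdot'\}$, and moreover $\pi$ is first order definable on $\mathfrak{M}$.
   Context: $P(+,\cdot)$ denotes the first order Peano axioms in the vocabulary $\{+,\cdot\}$, with Induction Schema $\forall x_1\ldots x_n((\phi(0,\bar x)\wedge\forall y(\phi(y,\bar x)\to\phi(y+1,\bar x)))\to\forall y\phi(y,\bar x))$, where $0$ and $1$ are defined terms denoting the identity elements of $+$ and $\cdot$ respectively. For a vocabulary $L$, $P(+,\cdot,L)$ denotes the extension of $P(+,\cdot)$ in which the Induction Schema is taken for all first order formulas $\phi(y,x_1,\ldots,x_n)$ of the vocabulary $\{+,\cdot\}\cup L$. $P(+',\cdot',L)$ is defined analogously for the vocabulary $\{+',\cdot'\}$ (with $0',1'$ the identity elements of $+',\cdot'$). $\mathfrak{M}\restriction L_0$ denotes the reduct of $\mathfrak{M}$ to $L_0$. First order definable means definable by a first order formula of vocabulary $\{+,\cdot,+',\cdot'\}$ in $\mathfrak{M}$. *)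

(* Defs.v *)
From Stdlib Require Import Arith.

Inductive fsym : Type := FAdd | FMul | FAdd' | FMul'.

Inductive term : Type :=
| Var : nat -> term
| App : fsym -> term -> term -> term.

Inductive formula : Type :=
| FEq : term -> term -> formula
| FFalse : formula
| FNot : formula -> formula
| FAnd : formula -> formula -> formula
| FOr : formula -> formula -> formula
| FImp : formula -> formula -> formula
| FAll : nat -> formula -> formula
| FEx : nat -> formula -> formula.

Record structure : Type := Structure {
  carrier :> Type;
  s_add : carrier -> carrier -> carrier;
  s_mul : carrier -> carrier -> carrier;
  s_add' : carrier -> carrier -> carrier;
  s_mul' : carrier -> carrier -> carrier }.

Definition interp (M : structure) (f : fsym) : M -> M -> M :=
  match f with
  | FAdd => s_add M | FMul => s_mul M | FAdd' => s_add' M | FMul' => s_mul' M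
  end.

Definition upd {M : Type} (e : nat -> M) (n : nat) (a : M) : nat -> M :=
  fun k => if Nat.eqb k n then a else e k.

Fixpoint eval (M : structure) (e : nat -> M) (t : term) : M :=
  match t with
  | Var n => e n
  | App f t1 t2 => interp M f (eval M e t1) (eval M e t2)
  end.

Fixpoint sat (M : structure) (e : nat -> M) (phi : formula) : Prop :=
  match phi with
  | FEq t1 t2 => eval M e t1 = eval M e t2
  | FFalse => False
  | FNot p => ~ sat M e p
  | FAnd p q => sat M e p /\ sat M e q
  | FOr p q => sat M e p \/ sat M e q
  | FImp p q => sat M e p -> sat M e q
  | FAll n p => forall a : M, sat M (upd e n a) p
  | FEx n p => exists a : M, sat M (upd e n a) p
  end.

Definition is_identity {A : Type} (op : A -> A -> A) (z : A) : Prop :=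
  forall x, op x z = x /\ op z x = x.

(* M satisfies P(add, mul, L), where L is the remaining two symbols:
   the first-order Peano axioms for add, mul (0 and 1 being the defined
   terms denoting the identity elements of add and mul), with the
   Induction Schema for ALL formulas of the full vocabulary
   {+, ., +', .'}.  The induction variable y is variable 0; all other
   variables of phi are the parameters x1..xn, given by the valuation e. *)
Definition Peano (M : structure) (add mul : M -> M -> M) : Prop :=
  (exists z : M, is_identity add z) /\
  (exists u : M, is_identity mul u) /\
  forall z u : M, is_identity add z -> is_identity mul u ->
    (forall x, add x u <> z) /\
    (forall x y, add x u = add y u -> x = y) /\
    (forall x, add x z = x) /\
    (forall x y, add x (add y u) = add (add x y) u) /\
    (forall x, mul x z = z) /\
    (forall x y, mul x (add y u) = add (mul x y) x) /\
    (forall (phi : formula) (e : nat -> M),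
        sat M (upd e 0 z) phi ->
        (forall y, sat M (upd e 0 y) phi -> sat M (upd e 0 (add y u)) phi) ->
        forall y, sat M (upd e 0 y) phi).

Definition iso_reducts (M : structure) (pi : M -> M) : Prop :=
  (forall x y, pi x = pi y -> x = y) /\
  (forall y, exists x, pi x = y) /\
  (forall x y, pi (s_add M x y) = s_add' M (pi x) (pi y)) /\
  (forall x y, pi (s_mul M x y) = s_mul' M (pi x) (pi y)).

(* pi is first order definable in M (without parameters): some formula
   psi(v0, v1) of vocabulary {+,.,+',.'} defines the graph of pi. *)
Definition fo_definable_fun (M : structure) (pi : M -> M) : Prop :=
  exists psi : formula,
    forall (e : nat -> M) (a b : M),
      sat M (upd (upd e 0 a) 1 b) psi <-> pi a = b.

(* Main.v *)
Require Import Defs.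
From Stdlib Require Import Arith Classical Ring IndefiniteDescription.

Section FOL.
Variable M : structure.
Definition Env := nat -> carrier M.

Definition FO (P : Env -> Prop) := exists phi, forall e, sat M e phi <-> P e.
Definition TM (T : Env -> carrier M) := exists t, forall e, eval M e t = T e.

Lemma TM_var k : TM (fun e => e k).
Proof. exists (Var k). reflexivity. Qed.
Lemma TM_app f T1 T2 : TM T1 -> TM T2 -> TM (fun e => interp M f (T1 e) (T2 e)).
Proof. intros [t1 H1] [t2 H2]. exists (App f t1 t2). intro e. simpl. rewrite H1, H2. reflexivity. Qed.
Lemma FO_eq T1 T2 : TM T1 -> TM T2 -> FO (fun e => T1 e = T2 e).
Proof. intros [t1 H1] [t2 H2]. exists (FEq t1 t2). intro e. simpl. rewrite H1, H2. tauto. Qed.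
Lemma FO_and P Q : FO P -> FO Q -> FO (fun e => P e /\ Q e).
Proof. intros [p H1] [q H2]. exists (FAnd p q). intro e. simpl. rewrite H1, H2. tauto. Qed.
Lemma FO_or P Q : FO P -> FO Q -> FO (fun e => P e \/ Q e).
Proof. intros [p H1] [q H2]. exists (FOr p q). intro e. simpl. rewrite H1, H2. tauto. Qed.
Lemma FO_imp P Q : FO P -> FO Q -> FO (fun e => P e -> Q e).
Proof. intros [p H1] [q H2]. exists (FImp p q). intro e. simpl. rewrite H1, H2. tauto. Qed.
Lemma FO_iff P Q : FO P -> FO Q -> FO (fun e => P e <-> Q e).
Proof. intros [p H1] [q H2]. exists (FAnd (FImp p q) (FImp q p)). intro e. simpl. rewrite H1, H2. tauto. Qed.
Lemma FO_not P : FO P -> FO (fun e => ~ P e).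
Proof. intros [p H1]. exists (FNot p). intro e. simpl. rewrite H1. tauto. Qed.
Lemma FO_False : FO (fun e => False).
Proof. exists FFalse. intro e. simpl. tauto. Qed.
Lemma FO_True : FO (fun e => True).
Proof. exists (FNot FFalse). intro e. simpl. tauto. Qed.

Lemma upd_same (e : Env) n a : upd e n a n = a.
Proof. unfold upd. rewrite Nat.eqb_refl. reflexivity. Qed.

Lemma FO_all n (B : Env -> carrier M -> Prop) :
  FO (fun e => B e (e n)) -> FO (fun e => forall a, B (upd e n a) a).
Proof.
  intros [p H]. exists (FAll n p). intro e. simpl. split; intros K a; specialize (K a).
  - apply H in K. rewrite upd_same in K. exact K.
  - apply H. rewrite upd_same. exact K.
Qed.
Lemma FO_ex n (B : Env -> carrier M -> Prop) :
  FO (fun e => B e (e n)) -> FO (fun e => exists a, B (upd e n a) a).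
Proof.
  intros [p H]. exists (FEx n p). intro e. simpl. split; intros [a K]; exists a.
  - apply H in K. rewrite upd_same in K. exact K.
  - apply H. rewrite upd_same. exact K.
Qed.
Lemma FO_const f c : (forall a, (forall w, interp M f w a = w) <-> a = c) ->
  forall C : carrier M -> Env -> Prop,
  FO (fun e => exists a, (forall w, interp M f w a = w) /\ C a e) -> FO (C c).
Proof.
  intros Hc C [p H]. exists p. intro e. rewrite H. split.
  - intros [a [Ha K]]. apply Hc in Ha. subst. exact K.
  - intro K. exists c. split; [apply Hc; reflexivity | exact K].
Qed.

Definition FOP (P : carrier M -> Prop) :=
  exists phi (e : Env), forall y, sat M (upd e 0 y) phi <-> P y.
Lemma FOP_intro (Q : Env -> Prop) (e0 : Env) (P : carrier M -> Prop) :
  FO Q -> (forall y, Q (upd e0 0 y) <-> P y) -> FOP P.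
Proof. intros [p H] K. exists p, e0. intro y. rewrite H. apply K. Qed.
End FOL.

Ltac fo_fresh M B n :=
  first [ change (FO M (fun e => forall a : carrier M, B (upd e n a) a)); apply (FO_all M n B)
        | change (FO M (fun e => exists a : carrier M, B (upd e n a) a)); apply (FO_ex M n B)
        | let n' := eval compute in (S n) in
          lazymatch n' with 80 => fail 1 "no fresh" | _ => fo_fresh M B n' end ].

Ltac fo_const :=
  match goal with
  | H : forall a, (forall w, interp ?M ?f w a = w) <-> a = ?c |- FO ?M ?P =>
    lazymatch P with context [c] =>
      let C := eval pattern c in P in
      lazymatch C with ?F c => apply (FO_const M f c H F) end end
  end.

Ltac fo_step :=
  lazymatch goal with
  | |- TM ?M (fun e => e ?k) => apply (TM_var M k)
  | |- TM ?M (fun e => interp ?M ?f (@?T1 e) (@?T2 e)) => apply (TM_app M f T1 T2)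
  | |- FO ?M (fun e => True) => apply (FO_True M)
  | |- FO ?M (fun e => False) => apply (FO_False M)
  | |- FO ?M (fun e => @eq _ (@?T1 e) (@?T2 e)) => apply (FO_eq M T1 T2)
  | |- FO ?M (fun e => @?P e /\ @?Q e) => apply (FO_and M P Q)
  | |- FO ?M (fun e => @?P e \/ @?Q e) => apply (FO_or M P Q)
  | |- FO ?M (fun e => @?P e <-> @?Q e) => apply (FO_iff M P Q)
  | |- FO ?M (fun e => ~ @?P e) => apply (FO_not M P)
  | |- FO ?M (fun e => forall a : carrier ?M, @?B e a) => fo_fresh M B 1
  | |- FO ?M (fun e => exists a : carrier ?M, @?B e a) => fo_fresh M B 1
  | |- FO ?M (fun e => @?P e -> @?Q e) => apply (FO_imp M P Q)
  end.

Ltac fo := repeat (cbv beta; first [ fo_const | fo_step ]).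

Ltac fop_fin M Q e0 P := apply (FOP_intro M Q e0 P); [ | intro; apply iff_refl ].


Ltac fop1 a := lazymatch goal with |- FOP ?M ?P =>
  let F := eval pattern a in P in lazymatch F with ?G a =>
  fop_fin M (fun e => G (e 1) (e 0)) (fun k : nat => a) P end end.
Ltac fop2 a b := lazymatch goal with |- FOP ?M ?P =>
  let F := eval pattern a, b in P in lazymatch F with ?G a b =>
  fop_fin M (fun e => G (e 1) (e 2) (e 0)) (fun k : nat => match k with 1 => a | _ => b end) P end end.
Ltac fop3 a b c := lazymatch goal with |- FOP ?M ?P =>
  let F := eval pattern a, b, c in P in lazymatch F with ?G a b c =>
  fop_fin M (fun e => G (e 1) (e 2) (e 3) (e 0)) (fun k : nat => match k with 1 => a | 2 => b | _ => c end) P end end.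
Ltac fop4 a b c d := lazymatch goal with |- FOP ?M ?P =>
  let F := eval pattern a, b, c, d in P in lazymatch F with ?G a b c d =>
  fop_fin M (fun e => G (e 1) (e 2) (e 3) (e 4) (e 0)) (fun k : nat => match k with 1 => a | 2 => b | 3 => c | _ => d end) P end end.
Ltac fop5 a b c d f := lazymatch goal with |- FOP ?M ?P =>
  let F := eval pattern a, b, c, d, f in P in lazymatch F with ?G a b c d f =>
  fop_fin M (fun e => G (e 1) (e 2) (e 3) (e 4) (e 5) (e 0)) (fun k : nat => match k with 1 => a | 2 => b | 3 => c | 4 => d | _ => f end) P end end.
Ltac fop6 a b c d f g := lazymatch goal with |- FOP ?M ?P =>
  let F := eval pattern a, b, c, d, f, g in P in lazymatch F with ?G a b c d f g =>
  fop_fin M (fun e => G (e 1) (e 2) (e 3) (e 4) (e 5) (e 6) (e 0)) (fun k : nat => match k with 1 => a | 2 => b | 3 => c | 4 => d | 5 => f | _ => g end) P end end.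
Ltac fop7 a b c d f g h := lazymatch goal with |- FOP ?M ?P =>
  let F := eval pattern a, b, c, d, f, g, h in P in lazymatch F with ?G a b c d f g h =>
  fop_fin M (fun e => G (e 1) (e 2) (e 3) (e 4) (e 5) (e 6) (e 7) (e 0)) (fun k : nat => match k with 1 => a | 2 => b | 3 => c | 4 => d | 5 => f | 6 => g | _ => h end) P end end.

Section Arith.
Set Default Proof Using "All".
Variable M : structure.
Variables fa fm : fsym.
Variables z u : carrier M.
Notation add := (interp M fa).
Notation mul := (interp M fm).
Notation S x := (add x u).
Hypothesis Hz : is_identity add z.
Hypothesis Hu : is_identity mul u.
Hypothesis A1 : forall x, add x u <> z.
Hypothesis A2 : forall x y, add x u = add y u -> x = y.
Hypothesis A4 : forall x y, add x (add y u) = add (add x y) u.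
Hypothesis A5 : forall x, mul x z = z.
Hypothesis A6 : forall x y, mul x (add y u) = add (mul x y) x.
Hypothesis Hind : forall (phi : formula) (e : nat -> carrier M),
        sat M (upd e 0 z) phi ->
        (forall y, sat M (upd e 0 y) phi -> sat M (upd e 0 (add y u)) phi) ->
        forall y, sat M (upd e 0 y) phi.

Lemma zdef : forall a, (forall w, add w a = w) <-> a = z.
Proof. intro a; split. - intro H. pose proof (H z). destruct (Hz a). congruence. - intros -> w. apply Hz. Qed.
Lemma udef : forall a, (forall w, mul w a = w) <-> a = u.
Proof. intro a; split. - intro H. pose proof (H u). destruct (Hu a). congruence. - intros -> w. apply Hu. Qed.

Lemma ind (P : carrier M -> Prop) : FOP M P -> P z -> (forall y, P y -> P (S y)) -> forall y, P y.
Proof.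
  intros [phi [e H]] H0 HS y. apply H. apply Hind.
  - apply H. exact H0.
  - intros y' K. apply H. apply HS. apply H. exact K.
Qed.

Lemma add_0_l x : add z x = x. Proof. apply Hz. Qed.
Lemma add_0_r x : add x z = x. Proof. apply Hz. Qed.

Ltac ffo := pose proof zdef; pose proof udef; solve [fo].
Ltac ap_ind := lazymatch goal with |- forall y : carrier M, @?P y => apply (ind P) end.

Lemma add_S_l x y : add (S x) y = S (add x y).
Proof.
  revert y. ap_ind; [fop1 x; ffo| |].
  - rewrite !add_0_r. reflexivity.
  - intros y IH. rewrite !A4, IH. reflexivity.
Qed.


Lemma add_comm x y : add x y = add y x.
Proof.
  revert y. ap_ind; [fop1 x; ffo| |].
  - rewrite add_0_r, add_0_l. reflexivity.
  - intros y IH. rewrite A4, add_S_l, IH. reflexivity.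
Qed.

Lemma add_assoc x y w : add (add x y) w = add x (add y w).
Proof.
  revert w. ap_ind; [fop2 x y; ffo| |].
  - rewrite !add_0_r. reflexivity.
  - intros w IH. rewrite !A4, IH. reflexivity.
Qed.

Lemma add_cancel_l x y w : add x y = add x w -> y = w.
Proof.
  revert y w. revert x. ap_ind; [fop1 z; ffo| |].
  - intros y w. rewrite !add_0_l. auto.
  - intros x IH y w. rewrite !add_S_l. intro H. apply A2 in H. auto.
Qed.

Lemma zero_or_succ x : x = z \/ exists p, x = S p.
Proof.
  revert x. ap_ind; [fop1 z; ffo| |].
  - left; reflexivity.
  - intros y _. right. exists y. reflexivity.
Qed.

Lemma mul_0_l x : mul z x = z.
Proof.
  revert x. ap_ind; [fop1 z; ffo| |].
  - apply A5.
  - intros y IH. rewrite A6, IH. apply add_0_r.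
Qed.

Lemma mul_S_l x y : mul (S x) y = add (mul x y) y.
Proof.
  revert y. ap_ind; [fop1 x; ffo| |].
  - rewrite !A5. rewrite add_0_r. reflexivity.
  - intros y IH. rewrite !A6, IH, !A4, !add_assoc. f_equal. rewrite !A4, (add_comm y x). reflexivity.
Qed.

Lemma mul_comm x y : mul x y = mul y x.
Proof.
  revert y. ap_ind; [fop1 x; ffo| |].
  - rewrite A5, mul_0_l. reflexivity.
  - intros y IH. rewrite A6, mul_S_l, IH. reflexivity.
Qed.

Lemma mul_1_l x : mul u x = x. Proof. apply Hu. Qed.

Lemma mul_add_r x y w : mul x (add y w) = add (mul x y) (mul x w).
Proof.
  revert w. ap_ind; [fop2 x y; ffo| |].
  - rewrite add_0_r, A5, add_0_r. reflexivity.
  - intros w IH. rewrite A4, !A6, IH. apply add_assoc.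
Qed.

Lemma mul_assoc x y w : mul (mul x y) w = mul x (mul y w).
Proof.
  revert w. ap_ind; [fop2 x y; ffo| |].
  - rewrite !A5. reflexivity.
  - intros w IH. rewrite !A6, IH, mul_add_r. reflexivity.
Qed.

Lemma Msrt : semi_ring_theory z u add mul (@eq (carrier M)).
Proof.
  constructor.
  - exact add_0_l.
  - exact add_comm.
  - intros; symmetry; apply add_assoc.
  - exact mul_1_l.
  - exact mul_0_l.
  - exact mul_comm.
  - intros; symmetry; apply mul_assoc.
  - intros x y w. rewrite mul_comm, mul_add_r, (mul_comm w x), (mul_comm w y). reflexivity.
Qed.
Add Ring Mring : Msrt.


Definition le x y := exists k, add x k = y.
Definition lt x y := le (S x) y.
Definition dvd a b := exists k, b = mul k a.
Definition md d p := add u (mul (S p) d).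
Definition member c d N p := le p N /\ dvd (md d p) c.
Definition pr a b := add (mul (add a b) (add a b)) a.
Definition coprime a b := forall g, dvd g a -> dvd g b -> g = u.
Definition allmul N d := d <> z /\ forall i, i <> z -> le i N -> dvd i d.

Ltac ffo2 := pose proof zdef; pose proof udef;
  unfold lt, member, allmul, coprime, dvd, md, pr, le; solve [fo].

Lemma add_eq_z_r x y : add x y = z -> y = z.
Proof.
  destruct (zero_or_succ y) as [->|[p ->]]; auto.
  rewrite A4. intro H. exfalso. exact (A1 _ H).
Qed.
Lemma add_eq_z_l x y : add x y = z -> x = z.
Proof. rewrite add_comm. apply add_eq_z_r. Qed.

Lemma le_refl x : le x x. Proof. exists z. apply add_0_r. Qed.
Lemma le_trans x y w : le x y -> le y w -> le x w.
Proof. intros [k1 H1] [k2 H2]. exists (add k1 k2). rewrite <- add_assoc, H1. exact H2. Qed.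
Lemma le_antisym x y : le x y -> le y x -> x = y.
Proof.
  intros [k1 H1] [k2 H2]. subst y. rewrite add_assoc in H2.
  rewrite <- (add_0_r x) in H2 at 2. apply add_cancel_l in H2.
  apply add_eq_z_l in H2. subst. symmetry. apply add_0_r.
Qed.
Lemma le_z_l x : le z x. Proof. exists x. apply add_0_l. Qed.
Lemma le_z_r x : le x z -> x = z. Proof. intros [k H]. exact (add_eq_z_l _ _ H). Qed.
Lemma le_S x y : le x y -> le x (S y).
Proof. intros [k H]. exists (S k). rewrite A4, H. reflexivity. Qed.
Lemma le_SS x y : le x y -> le (S x) (S y).
Proof. intros [k H]. exists k. rewrite add_S_l, H. reflexivity. Qed.
Lemma le_Sn x : le x (S x). Proof. apply le_S, le_refl. Qed.
Lemma lt_le x y : lt x y -> le x y.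
Proof. intro H. apply (le_trans _ (S x)); auto using le_Sn. Qed.
Lemma lt_irrefl x : ~ lt x x.
Proof.
  intros [k H]. rewrite add_S_l, <- A4 in H. rewrite <- (add_0_r x) in H at 2.
  apply add_cancel_l in H. exact (A1 _ H).
Qed.
Lemma lt_z x : ~ lt x z.
Proof. intro H. apply le_z_r in H. exact (A1 _ H). Qed.
Lemma lt_S x y : lt x (S y) -> le x y.
Proof. intros [k H]. exists k. rewrite add_S_l in H. apply A2 in H. exact H. Qed.
Lemma le_lt_eq x y : le x y -> x = y \/ lt x y.
Proof.
  intros [k H]. destruct (zero_or_succ k) as [->|[p ->]].
  - left. rewrite add_0_r in H. exact H.
  - right. exists p. rewrite add_S_l, <- A4. exact H.
Qed.
Lemma le_S_cases x y : le x (S y) -> le x y \/ x = S y.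
Proof. intro H. destruct (le_lt_eq _ _ H) as [H1|H1]; auto. left. apply lt_S. exact H1. Qed.
Lemma lt_le_trans x y w : lt x y -> le y w -> lt x w.
Proof. unfold lt. apply le_trans. Qed.
Lemma le_lt_trans x y w : le x y -> lt y w -> lt x w.
Proof. intros H1 H2. unfold lt. apply (le_trans _ (S y)); auto. apply le_SS; auto. Qed.
Lemma lt_neq x y : lt x y -> x <> y.
Proof. intros H ->. exact (lt_irrefl _ H). Qed.

Lemma le_lt_total x y : le x y \/ lt y x.
Proof.
  revert x. ap_ind; [fop1 y; ffo2| |].
  - left. apply le_z_l.
  - intros x [[k H]|H].
    + destruct (zero_or_succ k) as [->|[p ->]].
      * right. rewrite add_0_r in H. subst. apply le_refl.
      * left. exists p. rewrite add_S_l, <- A4. exact H.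
    + right. apply le_S. exact H.
Qed.
Lemma le_add x y : le x (add x y). Proof. exists y. reflexivity. Qed.
Lemma le_add_l x y : le y (add x y). Proof. exists x. apply add_comm. Qed.

Lemma mul_eq_z a b : mul a b = z -> a = z \/ b = z.
Proof.
  destruct (zero_or_succ a) as [->|[p ->]]; auto.
  destruct (zero_or_succ b) as [->|[q ->]]; auto.
  intro H. exfalso. rewrite A6, A4 in H. exact (A1 _ H).
Qed.

Lemma mul_cancel_aux x y w : w <> z -> le x y -> mul x w = mul y w -> x = y.
Proof.
  intros Hw [k <-] H. assert (E : mul (add x k) w = add (mul x w) (mul k w)) by ring.
  rewrite E in H. rewrite <- (add_0_r (mul x w)) in H at 1. apply add_cancel_l in H.
  symmetry in H. destruct (mul_eq_z _ _ H) as [->|]; [|contradiction]. symmetry; apply add_0_r.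
Qed.
Lemma mul_cancel_r x y w : w <> z -> mul x w = mul y w -> x = y.
Proof.
  intros Hw H. destruct (le_lt_total x y) as [H1|H1].
  - eapply mul_cancel_aux; eauto.
  - symmetry. eapply mul_cancel_aux; eauto. apply lt_le. exact H1.
Qed.
Lemma le_mul_pos x w : w <> z -> le x (mul x w).
Proof.
  intro Hw. destruct (zero_or_succ w) as [->|[p ->]]; [contradiction|].
  rewrite A6. apply le_add_l.
Qed.

Lemma divmod t : t <> z -> forall s, exists q r, s = add (mul q t) r /\ lt r t.
Proof.
  intro Ht. ap_ind; [fop1 t; ffo2| |].
  - exists z, z. split. + rewrite mul_0_l, add_0_r. reflexivity.
    + destruct (zero_or_succ t) as [->|[p ->]]; [contradiction|]. apply le_SS, le_z_l.
  - intros s [q [r [-> H]]]. destruct (le_lt_eq _ _ H) as [E|E].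
    + exists (S q), z. split; [|exact (lt_le_trans _ _ _ (le_lt_trans _ _ _ (le_z_l r) (le_refl _)) H)].
      rewrite <- E. ring.
    + exists q, (S r). split; [ring | exact E].
Qed.

Lemma dvd_refl a : dvd a a. Proof. exists u. symmetry. apply mul_1_l. Qed.
Lemma dvd_z a : dvd a z. Proof. exists z. symmetry. apply mul_0_l. Qed.
Lemma dvd_mul_l a k : dvd a (mul k a). Proof. exists k. reflexivity. Qed.
Lemma dvd_mul_r a k : dvd a (mul a k). Proof. exists k. apply mul_comm. Qed.
Lemma dvd_trans a b c : dvd a b -> dvd b c -> dvd a c.
Proof. intros [k1 ->] [k2 ->]. exists (mul k2 k1). ring. Qed.
Lemma dvd_mulr a b c : dvd a b -> dvd a (mul b c).
Proof. intros [k ->]. exists (mul k c). ring. Qed.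
Lemma dvd_mull a b c : dvd a b -> dvd a (mul c b).
Proof. intros [k ->]. exists (mul c k). ring. Qed.
Lemma dvd_add a x y : dvd a x -> dvd a y -> dvd a (add x y).
Proof. intros [i ->] [j ->]. exists (add i j). ring. Qed.
Lemma dvd_add_cancel a x y : dvd a (add x y) -> dvd a x -> dvd a y.
Proof.
  intros [j Hj] [i Hi]. destruct (classic (a = z)) as [Ha|Ha].
  - subst a. rewrite Hi, A5, add_0_l, A5 in Hj. rewrite Hj. apply dvd_z.
  - destruct (le_lt_total i j) as [[k Hk]|[k Hk]].
    + subst j x. exists k. assert (E : mul (add i k) a = add (mul i a) (mul k a)) by ring.
      rewrite E in Hj. apply add_cancel_l in Hj. exact Hj.
    + subst i x. exfalso. apply Ha.
      assert (E : add (mul (add (S j) k) a) y = add (mul j a) (add a (add (mul k a) y))) by ring.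
      rewrite E in Hj. rewrite <- (add_0_r (mul j a)) in Hj at 2. apply add_cancel_l in Hj.
      exact (add_eq_z_l _ _ Hj).
Qed.
Lemma dvd_le a b : dvd a b -> b <> z -> le a b.
Proof.
  intros [k ->] Hb. destruct (zero_or_succ k) as [->|[p ->]].
  - rewrite mul_0_l in Hb. contradiction.
  - rewrite mul_S_l. apply le_add_l.
Qed.
Lemma u_eq : u = S z. Proof. symmetry. apply add_0_l. Qed.
Lemma u_nz : u <> z. Proof. rewrite u_eq. apply A1. Qed.
Lemma dvd_u a : dvd a u -> a = u.
Proof.
  intro H. pose proof (dvd_le _ _ H u_nz) as H1. rewrite u_eq in H1.
  destruct (le_S_cases _ _ H1) as [H2|H2].
  - apply le_z_r in H2. subst. destruct H as [k Hk]. rewrite A5 in Hk. exfalso. exact (u_nz Hk).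
  - rewrite u_eq. exact H2.
Qed.

Lemma lnp (P : carrier M -> Prop) : FOP M (fun n => forall k, le k n -> ~ P k) ->
  forall a, P a -> exists m, P m /\ forall k, P k -> le m k.
Proof.
  intros HF a Ha. apply NNPP. intro Hno.
  assert (K : forall n k, le k n -> ~ P k).
  { apply (ind _ HF).
    - intros k Hk HP. apply le_z_r in Hk. subst k. apply Hno. exists z. split; auto.
      intros; apply le_z_l.
    - intros n IH k Hk HP. destruct (le_S_cases _ _ Hk) as [H1|H1].
      + exact (IH k H1 HP).
      + subst k. apply Hno. exists (S n). split; auto. intros j Hj.
        destruct (le_lt_total (S n) j) as [H2|H2]; auto.
        exfalso. exact (IH j (lt_S _ _ H2) Hj). }
  exact (K a a (le_refl a) Ha).
Qed.

Lemma euclid a b c : a <> z -> coprime a b -> dvd a (mul b c) -> dvd a c.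
Proof.
  intros Ha Hab Hbc.
  assert (HF : FOP M (fun n => forall k, le k n -> ~ (k <> z /\ dvd a (mul k c)))) by (fop2 a c; ffo2).
  assert (Hst : a <> z /\ dvd a (mul a c)) by (split; auto; apply dvd_mul_r).
  destruct (lnp (fun t => t <> z /\ dvd a (mul t c)) HF a Hst) as [t [[Ht0 Ht] Hmin]].
  assert (Hd : forall s, dvd a (mul s c) -> dvd t s).
  { intros s Hs. destruct (divmod t Ht0 s) as [q [r [-> Hr]]].
    destruct (classic (r = z)) as [->|Hrz].
    - rewrite add_0_r. apply dvd_mul_l.
    - exfalso. assert (Hrc : dvd a (mul r c)).
      { apply (dvd_add_cancel _ (mul (mul q t) c)).
        + assert (E : add (mul (mul q t) c) (mul r c) = mul (add (mul q t) r) c) by ring.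
          rewrite E. exact Hs.
        + assert (E : mul (mul q t) c = mul q (mul t c)) by ring. rewrite E.
          apply dvd_mull. exact Ht. }
      specialize (Hmin r (conj Hrz Hrc)). exact (lt_irrefl _ (le_lt_trans _ _ _ Hmin Hr)). }
  assert (Htu : t = u).
  { apply Hab. - apply Hd. apply dvd_mul_r. - apply Hd. exact Hbc. }
  subst t. rewrite mul_1_l in Ht. exact Ht.
Qed.


Lemma coprime_sym a b : coprime a b -> coprime b a.
Proof. intros H g H1 H2. exact (H g H2 H1). Qed.

Lemma md_nz d p : md d p <> z.
Proof. unfold md. intro H. exact (u_nz (add_eq_z_l _ _ H)). Qed.

Lemma md_ndvd_u d p : d <> z -> ~ dvd (md d p) u.
Proof.
  intros Hd H. apply dvd_u in H. unfold md in H.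
  assert (H' : add u (mul (S p) d) = add u z) by (rewrite add_0_r; exact H).
  apply add_cancel_l in H'. clear H. rename H' into H. destruct (mul_eq_z _ _ H) as [H1|H1]; [exact (A1 _ H1)|exact (Hd H1)].
Qed.

Lemma exists_allmul N : exists d, allmul N d.
Proof.
  revert N. ap_ind; [fop1 z; ffo2| |].
  - exists u. split; [exact u_nz|]. intros i Hi Hl. apply le_z_r in Hl. contradiction.
  - intros N [d [Hd0 Hd]]. exists (mul d (S N)). split.
    + intro H. destruct (mul_eq_z _ _ H) as [H1|H1]; [exact (Hd0 H1)|exact (A1 _ H1)].
    + intros i Hi Hl. destruct (le_S_cases _ _ Hl) as [H1|H1].
      * apply dvd_mulr. apply Hd; auto.
      * subst i. apply dvd_mul_l.
Qed.

Lemma coprime_md_lt N d p k : allmul N d -> le k N -> lt p k -> coprime (md d p) (md d k).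
Proof.
  intros [Hd0 Hd] HkN [j' Hj']. set (j := S j').
  assert (Ek : md d k = add (md d p) (mul j d)) by (unfold md, j; rewrite <- Hj'; ring).
  intros g Hgp Hgk.
  assert (Hg0 : g <> z).
  { intro H; subst g. destruct Hgp as [k0 Hk0]. rewrite A5 in Hk0. exact (md_nz _ _ Hk0). }
  assert (Hgd : coprime g d).
  { intros h Hhg Hhd. apply dvd_u. apply (dvd_add_cancel _ (mul (S p) d)).
    - rewrite add_comm. exact (dvd_trans _ _ _ Hhg Hgp).
    - apply dvd_mull. exact Hhd. }
  assert (Hgj : dvd g j).
  { apply (euclid g d j Hg0 Hgd). rewrite mul_comm. apply (dvd_add_cancel _ (md d p)).
    - rewrite <- Ek. exact Hgk.
    - exact Hgp. }
  assert (Hjd : dvd j d).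
  { apply Hd. - apply A1. - apply (le_trans _ k); auto. exists p. rewrite <- Hj'. unfold j. ring. }
  apply dvd_u. apply (dvd_add_cancel _ (mul (S p) d)).
  - rewrite add_comm. exact Hgp.
  - apply dvd_mull. exact (dvd_trans _ _ _ Hgj Hjd).
Qed.

Lemma coprime_md N d p k : allmul N d -> le p N -> le k N -> p <> k -> coprime (md d p) (md d k).
Proof.
  intros Ha Hp Hk Hne. destruct (le_lt_total p k) as [H|H].
  - destruct (le_lt_eq _ _ H) as [H1|H1]; [contradiction|]. eapply coprime_md_lt; eauto.
  - apply coprime_sym. eapply coprime_md_lt; eauto.
Qed.

Lemma compr c0 d0 N0 q N : exists c d, forall p,
  member c d N p <-> (le p N /\ (member c0 d0 N0 p \/ p = q)).
Proof.
  destruct (exists_allmul N) as [d Hd].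
  assert (K : forall k, exists c, c <> z /\ forall p,
     (le p N /\ dvd (md d p) c) <-> (le p N /\ (member c0 d0 N0 p \/ p = q) /\ lt p k)).
  { ap_ind; [fop6 d N c0 d0 N0 q; ffo2| |].
    - exists u. split; [exact u_nz|]. intro p. split.
      + intros [_ H]. exfalso. exact (md_ndvd_u d p (proj1 Hd) H).
      + intros [_ [_ H]]. exfalso. exact (lt_z _ H).
    - intros k [c [Hc0 Hc]]. destruct (classic (le k N /\ (member c0 d0 N0 k \/ k = q))) as [Hk|Hk].
      + exists (mul c (md d k)). split.
        * intro H. destruct (mul_eq_z _ _ H) as [H1|H1]; [exact (Hc0 H1)|exact (md_nz _ _ H1)].
        * intro p. split.
          -- intros [HpN Hdv]. destruct (classic (p = k)) as [->|Hpk].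
             ++ split; auto. split; [apply Hk|]. apply le_refl.
             ++ assert (H1 : dvd (md d p) c).
                { apply (euclid _ (md d k)); [apply md_nz| |].
                  - apply (coprime_md N); auto. apply Hk.
                  - rewrite mul_comm. exact Hdv. }
                destruct (proj1 (Hc p) (conj HpN H1)) as [A [B C]]. split; auto. split; auto.
                apply le_S. exact C.
          -- intros [HpN [HQ Hlt]]. split; auto. destruct (le_S_cases _ _ Hlt) as [H1|H1].
             ++ apply dvd_mulr. apply (Hc p). auto.
             ++ apply A2 in H1. subst p. apply dvd_mull, dvd_refl.
      + exists c. split; auto. intro p. split.
        * intro H. destruct (proj1 (Hc p) H) as [A [B C]]. split; auto. split; auto. apply le_S. exact C.
        * intros [HpN [HQ Hlt]]. destruct (le_S_cases _ _ Hlt) as [H1|H1].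
          -- apply (Hc p). auto.
          -- apply A2 in H1. subst p. exfalso. auto. }
  destruct (K (S N)) as [c [_ Hc]]. exists c, d. intro p. unfold member at 1. rewrite Hc.
  split.
  - intros [A [B _]]. auto.
  - intros [A B]. split; auto. split; auto. apply le_SS. exact A.
Qed.

Lemma pr_lt a b a' b' j : add a' b' = add (S (add a b)) j -> pr a b <> pr a' b'.
Proof.
  intros H E. unfold pr in E. rewrite H in E.
  set (two := add u u) in *.
  assert (F : add (mul (add (S (add a b)) j) (add (S (add a b)) j)) a' =
    add (add (mul (add a b) (add a b)) a)
      (S (add (add (add a (mul two b)) (mul two (mul (add a b) j))) (add (add (mul two j) (mul j j)) a')))).
  { unfold two. ring. }
  rewrite F in E. rewrite <- (add_0_r (add (mul (add a b) (add a b)) a)) in E at 1.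
  apply add_cancel_l in E. symmetry in E. exact (A1 _ E).
Qed.

Lemma pr_inj a b a' b' : pr a b = pr a' b' -> a = a' /\ b = b'.
Proof.
  intro E. destruct (le_lt_total (add a b) (add a' b')) as [H|[j Hj]].
  - destruct (le_lt_eq _ _ H) as [H1|[j Hj]].
    + unfold pr in E. rewrite H1 in E. apply add_cancel_l in E. subst a'. split; auto.
      apply add_cancel_l in H1. exact H1.
    + exfalso. exact (pr_lt a b a' b' j (eq_sym Hj) E).
  - exfalso. exact (pr_lt a' b' a b j (eq_sym Hj) (eq_sym E)).
Qed.

End Arith.

Section Main.
Set Default Proof Using "All".
Variable M : structure.
Variables z1 u1 z2 u2 : carrier M.
Notation add1 := (interp M FAdd). Notation mul1 := (interp M FMul).
Notation add2 := (interp M FAdd'). Notation mul2 := (interp M FMul').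
Notation S1 x := (add1 x u1). Notation S2 x := (add2 x u2).
Hypothesis Hz1 : is_identity add1 z1.
Hypothesis Hu1 : is_identity mul1 u1.
Hypothesis A1 : forall x, add1 x u1 <> z1.
Hypothesis A2 : forall x y, add1 x u1 = add1 y u1 -> x = y.
Hypothesis A4 : forall x y, add1 x (add1 y u1) = add1 (add1 x y) u1.
Hypothesis A5 : forall x, mul1 x z1 = z1.
Hypothesis A6 : forall x y, mul1 x (add1 y u1) = add1 (mul1 x y) x.
Hypothesis Hind1 : forall (phi : formula) (e : nat -> carrier M),
        sat M (upd e 0 z1) phi ->
        (forall y, sat M (upd e 0 y) phi -> sat M (upd e 0 (add1 y u1)) phi) ->
        forall y, sat M (upd e 0 y) phi.
Hypothesis Hz2 : is_identity add2 z2.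
Hypothesis Hu2 : is_identity mul2 u2.
Hypothesis B1 : forall x, add2 x u2 <> z2.
Hypothesis B2 : forall x y, add2 x u2 = add2 y u2 -> x = y.
Hypothesis B4 : forall x y, add2 x (add2 y u2) = add2 (add2 x y) u2.
Hypothesis B5 : forall x, mul2 x z2 = z2.
Hypothesis B6 : forall x y, mul2 x (add2 y u2) = add2 (mul2 x y) x.
Hypothesis Hind2 : forall (phi : formula) (e : nat -> carrier M),
        sat M (upd e 0 z2) phi ->
        (forall y, sat M (upd e 0 y) phi -> sat M (upd e 0 (add2 y u2)) phi) ->
        forall y, sat M (upd e 0 y) phi.

Notation I1 L := (L M FAdd FMul z1 u1 Hz1 Hu1 A1 A2 A4 A5 A6 Hind1).
Notation I2 L := (L M FAdd' FMul' z2 u2 Hz2 Hu2 B1 B2 B4 B5 B6 Hind2).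

Notation le1 := (le M FAdd).
Notation lt1 := (lt M FAdd u1).
Definition In c d N a b := member M FAdd FMul u1 c d N (pr M FAdd FMul a b).
Definition Good c d N x :=
   (forall a b, In c d N a b -> le1 a x) /\
   (forall a, le1 a x -> exists b, In c d N a b) /\
   (forall a b b', In c d N a b -> In c d N a b' -> b = b') /\
   In c d N z1 z2 /\
   (forall a b, lt1 a x -> In c d N a b -> In c d N (S1 a) (S2 b)).
Definition R x y := exists c d N, Good c d N x /\ In c d N x y.

Ltac mfo := pose proof (I1 zdef); pose proof (I1 udef); pose proof (I2 zdef); pose proof (I2 udef);
  unfold R, Good, In, lt, member, allmul, coprime, dvd, md, pr, le; solve [fo].
Ltac ind1 := lazymatch goal with |- forall y : carrier M, @?P y => apply (I1 ind P) end.
Ltac ind2 := lazymatch goal with |- forall y : carrier M, @?P y => apply (I2 ind P) end.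

Lemma union_code c d N q : exists c' d' N', forall a b,
  In c' d' N' a b <-> In c d N a b \/ pr M FAdd FMul a b = q.
Proof.
  destruct (I1 compr c d N q (add1 N q)) as [c' [d' H]]. exists c', d', (add1 N q).
  intros a b. unfold In. rewrite H. split.
  - intros [_ K]. exact K.
  - intros [K|K]; split; auto.
    + apply (I1 le_trans _ N). apply K. apply (I1 le_add).
    + rewrite K. apply (I1 le_add_l).
Qed.

Lemma good0 : exists c d N, Good c d N z1.
Proof.
  destruct (union_code u1 u1 z1 (pr M FAdd FMul z1 z2)) as [c [d [N H]]].
  assert (H' : forall a b, In c d N a b <-> a = z1 /\ b = z2).
  { intros a b. rewrite H. split.
    - intros [[_ K]|K].
      + exfalso. apply (I1 md_ndvd_u u1 _ (I1 u_nz) K).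
      + apply (I1 pr_inj) in K. exact K.
    - intros [-> ->]. right. reflexivity. }
  exists c, d, N. split; [|split; [|split; [|split]]].
  - intros a b K. apply H' in K. destruct K as [-> _]. apply (I1 le_refl).
  - intros a K. apply (I1 le_z_r) in K. subst. exists z2. apply H'. auto.
  - intros a b b' K1 K2. apply H' in K1. apply H' in K2. destruct K1, K2. congruence.
  - apply H'. auto.
  - intros a b K. exfalso. exact (I1 lt_z _ K).
Qed.

Lemma good_step c d N x y : Good c d N x -> In c d N x y ->
  exists c' d' N', Good c' d' N' (S1 x) /\ In c' d' N' (S1 x) (S2 y).
Proof.
  intros [G1 [G2 [G3 [G4 G5]]]] Hxy.
  destruct (union_code c d N (pr M FAdd FMul (S1 x) (S2 y))) as [c' [d' [N' H]]].
  exists c', d', N'. split; [|apply H; right; reflexivity].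
  split; [|split; [|split; [|split]]].
  - intros a b K. apply H in K. destruct K as [K|K].
    + apply (I1 le_S). exact (G1 _ _ K).
    + apply (I1 pr_inj) in K. destruct K as [-> _]. apply (I1 le_refl).
  - intros a K. destruct (I1 le_S_cases _ _ K) as [K1|K1].
    + destruct (G2 a K1) as [b Hb]. exists b. apply H. auto.
    + subst a. exists (S2 y). apply H. auto.
  - intros a b b' K1 K2. apply H in K1. apply H in K2.
    destruct K1 as [K1|K1]; destruct K2 as [K2|K2].
    + exact (G3 _ _ _ K1 K2).
    + apply (I1 pr_inj) in K2. destruct K2 as [-> _]. exfalso. exact (I1 lt_irrefl _ (G1 _ _ K1)).
    + apply (I1 pr_inj) in K1. destruct K1 as [-> _]. exfalso. exact (I1 lt_irrefl _ (G1 _ _ K2)).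
    + apply (I1 pr_inj) in K1. apply (I1 pr_inj) in K2. destruct K1, K2. congruence.
  - apply H. auto.
  - intros a b K1 K2. apply H in K2. apply (I1 lt_S) in K1. destruct K2 as [K2|K2].
    + destruct (I1 le_lt_eq _ _ K1) as [E|E].
      * subst a. assert (b = y) by exact (G3 _ _ _ K2 Hxy). subst b. apply H. auto.
      * apply H. left. exact (G5 _ _ E K2).
    + apply (I1 pr_inj) in K2. destruct K2 as [-> _]. exfalso.
      exact (I1 lt_irrefl _ (I1 le_lt_trans _ _ _ K1 (I1 le_refl _))).
Qed.

Lemma good_all : forall x, exists c d N, Good c d N x.
Proof.
  ind1; [fop1 z1; mfo | exact good0 |].
  intros x [c [d [N HG]]]. destruct ((proj1 (proj2 HG)) x (I1 le_refl x)) as [y Hy].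
  destruct (good_step c d N x y HG Hy) as [c' [d' [N' [K _]]]]. eauto.
Qed.

Lemma R_total x : exists y, R x y.
Proof.
  destruct (good_all x) as [c [d [N HG]]]. destruct ((proj1 (proj2 HG)) x (I1 le_refl x)) as [y Hy].
  exists y, c, d, N. auto.
Qed.

Lemma R_succ x y : R x y -> R (S1 x) (S2 y).
Proof.
  intros [c [d [N [HG Hy]]]]. destruct (good_step c d N x y HG Hy) as [c' [d' [N' [K1 K2]]]].
  exists c', d', N'. auto.
Qed.

Lemma R_zero : R z1 z2.
Proof. destruct good0 as [c [d [N HG]]]. exists c, d, N. split; auto. apply HG. Qed.

Lemma good_agree c1 d1 N1 c2 d2 N2 x : Good c1 d1 N1 x -> Good c2 d2 N2 x ->
  forall a, le1 a x -> forall b b', In c1 d1 N1 a b -> In c2 d2 N2 a b' -> b = b'.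
Proof.
  intros [G1 [G2 [G3 [G4 G5]]]] [H1 [H2 [H3 [H4 H5]]]].
  ind1; [fop7 c1 d1 N1 c2 d2 N2 x; mfo| |].
  - intros _ b b' K1 K2. rewrite (G3 _ _ _ K1 G4), (H3 _ _ _ K2 H4). reflexivity.
  - intros a IH Ha b b' K1 K2.
    assert (Hlt : lt1 a x) by exact Ha.
    assert (Hax : le1 a x) by exact (I1 lt_le _ _ Hlt).
    destruct (G2 a Hax) as [w Hw]. destruct (H2 a Hax) as [w' Hw'].
    rewrite (G3 _ _ _ K1 (G5 _ _ Hlt Hw)), (H3 _ _ _ K2 (H5 _ _ Hlt Hw')).
    rewrite (IH Hax w w' Hw Hw'). reflexivity.
Qed.

Lemma R_fun x y y' : R x y -> R x y' -> y = y'.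
Proof.
  intros [c1 [d1 [N1 [HG1 K1]]]] [c2 [d2 [N2 [HG2 K2]]]].
  exact (good_agree _ _ _ _ _ _ _ HG1 HG2 x (I1 le_refl x) _ _ K1 K2).
Qed.

Lemma R_FO : FO M (fun e => R (e 0) (e 1)).
Proof. mfo. Qed.


Definition pi x := proj1_sig (constructive_indefinite_description _ (R_total x)).
Lemma pi_R x : R x (pi x).
Proof. unfold pi. destruct (constructive_indefinite_description _ (R_total x)) as [y Hy]. exact Hy. Qed.
Lemma R_pi x y : R x y -> pi x = y.
Proof. intro H. exact (R_fun _ _ _ (pi_R x) H). Qed.

Lemma hom_add_R : forall y x a b c, R (add1 x y) a -> R x b -> R y c -> a = add2 b c.
Proof.
  ind1; [fop1 z1; mfo| |].
  - intros x a b c Ha Hb Hc. destruct (Hz1 x) as [E _]. rewrite E in Ha.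
    rewrite (R_fun _ _ _ Ha Hb), (R_fun _ _ _ Hc R_zero). destruct (Hz2 b) as [E' _]. auto.
  - intros y IH x a b c Ha Hb Hc. rewrite A4 in Ha.
    pose proof (R_succ _ _ (pi_R (add1 x y))) as K1. rewrite (R_fun _ _ _ Ha K1).
    pose proof (R_succ _ _ (pi_R y)) as K2. rewrite (R_fun _ _ _ Hc K2).
    rewrite (IH x _ b _ (pi_R _) Hb (pi_R y)). rewrite B4. reflexivity.
Qed.
Lemma hom_add x y : pi (add1 x y) = add2 (pi x) (pi y).
Proof. apply (hom_add_R y x); apply pi_R. Qed.

Lemma hom_mul_R : forall y x a b c, R (mul1 x y) a -> R x b -> R y c -> a = mul2 b c.
Proof.
  ind1; [fop1 z1; mfo| |].
  - intros x a b c Ha Hb Hc. rewrite A5 in Ha.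
    rewrite (R_fun _ _ _ Ha R_zero), (R_fun _ _ _ Hc R_zero), B5. reflexivity.
  - intros y IH x a b c Ha Hb Hc. rewrite A6 in Ha.
    rewrite <- (R_pi _ _ Ha), hom_add, (R_pi _ _ Hb).
    pose proof (R_succ _ _ (pi_R y)) as K2. rewrite (R_fun _ _ _ Hc K2).
    rewrite (IH x _ b _ (pi_R _) Hb (pi_R y)). rewrite B6. reflexivity.
Qed.
Lemma hom_mul x y : pi (mul1 x y) = mul2 (pi x) (pi y).
Proof. apply (hom_mul_R y x); apply pi_R. Qed.

Lemma pi_inj_R : forall x x' b, R x b -> R x' b -> x = x'.
Proof.
  ind1; [fop1 z1; mfo| |].
  - intros x' b H1 H2. rewrite <- (R_fun _ _ _ R_zero H1) in H2.
    destruct (I1 zero_or_succ x') as [->|[p ->]]; auto.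
    pose proof (R_succ _ _ (pi_R p)) as K. exfalso. exact (B1 _ (R_fun _ _ _ K H2)).
  - intros x IH x' b H1 H2. pose proof (R_succ _ _ (pi_R x)) as K.
    rewrite <- (R_fun _ _ _ K H1) in H2.
    destruct (I1 zero_or_succ x') as [->|[p ->]].
    + exfalso. exact (B1 _ (R_fun _ _ _ H2 R_zero)).
    + pose proof (R_succ _ _ (pi_R p)) as K'. pose proof (B2 _ _ (R_fun _ _ _ H2 K')) as E.
      rewrite (IH p (pi x) (pi_R x)); [reflexivity|]. rewrite E. apply pi_R.
Qed.

Lemma pi_surj_R : forall y, exists x, R x y.
Proof.
  ind2; [fop1 z2; mfo| |].
  - exists z1. exact R_zero.
  - intros y [x Hx]. exists (S1 x). apply R_succ. exact Hx.
Qed.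

Lemma main_sec : exists pi : carrier M -> carrier M, iso_reducts M pi /\ fo_definable_fun M pi.
Proof.
  exists pi. split.
  - split; [|split; [|split]].
    + intros x y E. apply (pi_inj_R x y (pi x) (pi_R x)). rewrite E. apply pi_R.
    + intro y. destruct (pi_surj_R y) as [x Hx]. exists x. apply R_pi. exact Hx.
    + exact hom_add.
    + exact hom_mul.
  - destruct R_FO as [phi Hphi]. exists phi. intros e a b. rewrite Hphi.
    unfold upd; simpl. split; [apply R_pi | intros <-; apply pi_R].
Qed.

End Main.

Theorem mainTheorem3 (M : structure) :
  Peano M (s_add M) (s_mul M) ->
  Peano M (s_add' M) (s_mul' M) ->
  exists pi : M -> M, iso_reducts M pi /\ fo_definable_fun M pi.
Proof.
  intros [[z1 Hz1] [[u1 Hu1] P1]] [[z2 Hz2] [[u2 Hu2] P2]].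
  destruct (P1 z1 u1 Hz1 Hu1) as [A1 [A2 [_ [A4 [A5 [A6 Hind1]]]]]].
  destruct (P2 z2 u2 Hz2 Hu2) as [B1 [B2 [_ [B4 [B5 [B6 Hind2]]]]]].
  exact (main_sec M z1 u1 z2 u2 Hz1 Hu1 A1 A2 A4 A5 A6 Hind1 Hz2 Hu2 B1 B2 B4 B5 B6 Hind2).
Qed.
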